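(* Suppose $\Sigma$ contains at least two propositional variables. There exists an AGM contraction operator for epistemic states $\div$, together with a faithful assignment $\Psi\mapsto\le_\Psi$ satisfying $[\![\Psi\div\alpha]\!]=[\![\Psi]\!]\cup\min([\![\neg\alpha]\!],\le_\Psi)$ for all $\Psi,\alpha$ and satisfying (CR9): for all $\Psi,\alpha$ and worlds $\omega_1,\omega_2\in[\![\neg\alpha]\!]$, $\omega_1\le_\Psi\omega_2 \Leftrightarrow \omega_1\le_{\Psi\div\alpha}\omega_2$, such that $\div$ violates (C9′): ''for all $\Psi,\alpha,\beta$, if $\alpha\models\beta$ then $\mathrm{Bel}(\Psi\div\alpha\div\beta) =_{\neg\alpha} \mathrm{Bel}(\Psi\div\beta)$''.
   Context: $\Sigma$ is a nonempty finite set of propositional variables, $\mathcal{L}$ the propositional language over $\Sigma$, $\Omega$ the set of worlds. $[\![\alpha]\!]$ is the set of models of $\alpha$; for a set $X$ of formulas $[\![X]\!]$ is the set of worlds satisfying all of $X$; $Cn(X)=\{\beta\mid X\models\beta\}$. $\mathcal{E}$ is a set of epistemic states; each $\Psi\in\mathcal{E}$ has a deductively closed belief set $\mathrm{Bel}(\Psi)\subseteq\mathcal{L}$; $\Psi\models\alpha$ iff $\alpha\in\mathrm{Bel}(\Psi)$; $[\![\Psi]\!]=[\![\mathrm{Bel}(\Psi)]\!]$. A belief change operator is a map $\div:\mathcal{E}\times\mathcal{L}\to\mathcal{E}$; $\Psi\div\alpha\div\beta$ means $(\Psi\div\alpha)\div\beta$. An AGM contraction operator for epistemic states is a belief change operator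 satisfying for all $\Psi,\alpha,\beta$: (C1) $\mathrm{Bel}(\Psi\div\alpha)\subseteq\mathrm{Bel}(\Psi)$; (C2) if $\alpha\notin\mathrm{Bel}(\Psi)$ then $\mathrm{Bel}(\Psi)\subseteq\mathrm{Bel}(\Psi\div\alpha)$; (C3) if $\alpha\not\equiv\top$ then $\alpha\notin\mathrm{Bel}(\Psi\div\alpha)$; (C4) $\mathrm{Bel}(\Psi)\subseteq Cn(\mathrm{Bel}(\Psi\div\alpha)\cup\{\alpha\})$; (C5) if $\alpha\equiv\beta$ then $\mathrm{Bel}(\Psi\div\alpha)=\mathrm{Bel}(\Psi\div\beta)$; (C6) $\mathrm{Bel}(\Psi\div\alpha)\cap\mathrm{Bel}(\Psi\div\beta)\subseteq\mathrm{Bel}(\Psi\div(\alpha\land\beta))$; (C7) if $\beta\notin\mathrm{Bel}(\Psi\div(\alpha\land\beta))$ then $\mathrm{Bel}(\Psi\div(\alpha\land\beta))\subseteq\mathrm{Bel}(\Psi\div\beta)$. For a total preorder $\le$ on $\Omega$ and $\Omega'\subseteq\Omega$, $\min(\Omega',\le)=\{\omega\in\Omega'\mid \omega\le\omega' \text{ for all }\omega'\in\Omega'\}$; $<$ is the strict part and $\simeq$ the induced equivalence. A faithful assignment maps each $\Psi$ to a total preorder $\le_\Psi$ on $\Omega$ with (FA1) $\omega_1,\omega_2\in[\![\Psi]\!]\Rightarrow\omega_1\simeq_\Psi\omega_2$ and (FA2) $\omega_1\in[\![\Psi]\!],\omega_2\notin[\![\Psi]\!]\Rightarrow\omega_1<_\Psi\omega_2$.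 $\alpha$-equivalence: for $\Omega_1,\Omega_2\subseteq\Omega$, $\Omega_1=_\alpha\Omega_2$ iff $\Omega_1\cap[\![\alpha]\!]=\Omega_2\cap[\![\alpha]\!]$; for sets of formulas $X=_\alpha Y$ iff $[\![X]\!]=_\alpha[\![Y]\!]$. *)

(* Defs.v *)
From mathcomp Require Import all_boot.
Set Implicit Arguments. Unset Strict Implicit. Unset Printing Implicit Defensive.

Inductive form (V : Type) : Type :=
| FVar : V -> form V
| FTop : form V
| FBot : form V
| FNeg : form V -> form V
| FAnd : form V -> form V -> form V
| FOr  : form V -> form V -> form V
| FImp : form V -> form V -> form V.
Arguments FTop {V}. Arguments FBot {V}.

Definition world (V : finType) := {ffun V -> bool}.

Fixpoint sat (V : finType) (w : world V) (a : form V) : Prop :=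
  match a with
  | FVar v => w v = true
  | FTop => True
  | FBot => False
  | FNeg b => ~ sat w b
  | FAnd b c => sat w b /\ sat w c
  | FOr b c => sat w b \/ sat w c
  | FImp b c => sat w b -> sat w c
  end.

Definition modsS (V : finType) (X : form V -> Prop) (w : world V) : Prop :=
  forall g, X g -> sat w g.

Definition entailsS (V : finType) (X : form V -> Prop) (b : form V) : Prop :=
  forall w, modsS X w -> sat w b.

Definition deductively_closed (V : finType) (X : form V -> Prop) : Prop :=
  forall b, entailsS X b -> X b.

Definition equiv (V : finType) (a b : form V) : Prop :=
  forall w, sat w a <-> sat w b.

Definition valid (V : finType) (a : form V) : Prop := forall w, sat w a.

Definition fentails (V : finType) (a b : form V) : Prop :=
  forall w, sat w a -> sat w b.

Definition AGM_contraction (V : finType) (E : Type) (Bel : E -> form V -> Prop)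
  (contr : E -> form V -> E) : Prop :=
  (forall P a g, Bel (contr P a) g -> Bel P g) /\
  (forall P a, ~ Bel P a -> forall g, Bel P g -> Bel (contr P a) g) /\
  (forall P a, ~ valid a -> ~ Bel (contr P a) a) /\
  (forall P a g, Bel P g ->
              entailsS (fun d => Bel (contr P a) d \/ d = a) g) /\
  (forall P a b, equiv a b ->
              forall g, Bel (contr P a) g <-> Bel (contr P b) g) /\
  (forall P a b g, Bel (contr P a) g -> Bel (contr P b) g ->
              Bel (contr P (FAnd a b)) g) /\
  (forall P a b, ~ Bel (contr P (FAnd a b)) b ->
              forall g, Bel (contr P (FAnd a b)) g -> Bel (contr P b) g).

Definition total_preorder (T : Type) (le : T -> T -> Prop) : Prop :=
  (forall x y z, le x y -> le y z -> le x z) /\ (forall x y, le x y \/ le y x).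

Definition faithful_assignment (V : finType) (E : Type) (Bel : E -> form V -> Prop)
  (le : E -> world V -> world V -> Prop) : Prop :=
  forall P, total_preorder (le P) /\
    (forall w1 w2, modsS (Bel P) w1 -> modsS (Bel P) w2 ->
                 le P w1 w2 /\ le P w2 w1) /\
    (forall w1 w2, modsS (Bel P) w1 -> ~ modsS (Bel P) w2 ->
                 le P w1 w2 /\ ~ le P w2 w1).

Definition is_min (T : Type) (O : T -> Prop) (le : T -> T -> Prop) (w : T) : Prop :=
  O w /\ forall w', O w' -> le w w'.

Definition eq_on (V : finType) (a : form V) (X Y : form V -> Prop) : Prop :=
  forall w, sat w a -> (modsS X w <-> modsS Y w).

Definition C9' (V : finType) (E : Type) (Bel : E -> form V -> Prop)
  (contr : E -> form V -> E) : Prop :=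
  forall P a b, fentails a b ->
    eq_on (FNeg a) (Bel (contr (contr P a) b)) (Bel (contr P b)).

Definition CR9 (V : finType) (E : Type) (contr : E -> form V -> E)
  (le : E -> world V -> world V -> Prop) : Prop :=
  forall P a w1 w2, sat w1 (FNeg a) -> sat w2 (FNeg a) ->
    (le P w1 w2 <-> le (contr P a) w1 w2).

(* Main.v *)
From Stdlib Require Import Classical.
Require Import Defs.
From mathcomp Require Import all_boot.

Lemma exists_min (T:finType) (R : T->T->Prop) (O:T->Prop) :
  total_preorder R -> (exists x, O x) -> exists m, is_min O R m.
Proof.
 intros [Htr Hto] [x Hx].
 assert (H: forall s : seq T, (exists x, O x /\ x \in s) ->
   exists m, O m /\ forall y, O y -> y \in s -> R m y).
 { elim=> [|z s IH] [y [Oy Hy]]; first by rewrite in_nil in Hy.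
   destruct (classic (exists y, O y /\ y \in s)) as [Hex|Hne].
   - destruct (IH Hex) as [m [Om Hm]].
     destruct (classic (O z)) as [Oz|Nz].
     + destruct (Hto z m) as [Hzm|Hmz].
       * exists z; split; [exact Oz|]. intros y' Oy' Hy'. rewrite in_cons in Hy'.
         case/orP: Hy' => [/eqP->|Hy'].
         -- destruct (Hto z z); assumption.
         -- exact (Htr _ _ _ Hzm (Hm _ Oy' Hy')).
       * exists m; split; [exact Om|]. intros y' Oy' Hy'. rewrite in_cons in Hy'.
         case/orP: Hy' => [/eqP->|Hy']; [exact Hmz| exact (Hm _ Oy' Hy')].
     + exists m; split; [exact Om|]. intros y' Oy' Hy'. rewrite in_cons in Hy'.
       case/orP: Hy' => [/eqP Heq|Hy']; [subst; contradiction| exact (Hm _ Oy' Hy')].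
   - rewrite in_cons in Hy. case/orP: Hy => [/eqP Heq|Hy];
       [|exfalso; apply Hne; exists y; auto].
     subst y. exists z; split; [exact Oy|]. intros y' Oy' Hy'. rewrite in_cons in Hy'.
     case/orP: Hy' => [/eqP->|Hy'];
       [destruct (Hto z z); assumption| exfalso; apply Hne; exists y'; auto]. }
 destruct (H (enum T)) as [m [Om Hm]].
 { exists x; split; [exact Hx| by rewrite mem_enum]. }
 exists m; split; [exact Om|]. intros y Oy; apply Hm; [exact Oy| by rewrite mem_enum].
Qed.

Definition lit (V : finType) (w: world V) (v : V) : form V :=
  if w v then FVar v else FNeg (FVar v).
Definition charf (V : finType) (w: world V) : form V :=
  foldr (fun v acc => FAnd (@lit V w v) acc) FTop (enum V).
Arguments lit {V}.
Arguments charf {V}.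

Lemma sat_fold (V : finType) (u w : world V) (s : seq V) :
  sat u (foldr (fun v acc => FAnd (@lit V w v) acc) FTop s) <-> forall v, v \in s -> u v = w v.
Proof.
 elim: s => [|v s IH] /=.
 - split; [intros _ v; by rewrite in_nil | done].
 - destruct IH as [IH1 IH2]. split.
   + move=> [Hl Hs] x. rewrite in_cons. case/orP => [/eqP->|Hx]; [|exact: (IH1 Hs)].
     move: Hl. rewrite /lit. case: (w v) => /=; [done|].
     case: (u v) => // H; exfalso; apply: H; reflexivity.
   + move=> H. split.
     * have := H v (mem_head v s). rewrite /lit. case: (w v) => /= ->; done.
     * apply: IH2 => x Hx; apply: H; by rewrite in_cons Hx orbT.
Qed.
Arguments sat_fold {V}.

Lemma sat_char (V : finType) (u w : world V) : sat u (charf w) <-> u = w.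
Proof.
 rewrite /charf. split.
 - move=> H. apply/ffunP => v. apply: (proj1 (sat_fold u w _) H). by rewrite mem_enum.
 - move=> ->. apply (proj2 (sat_fold w w _)). by [].
Qed.
Arguments sat_char {V}.

Definition BelOf (V : finType) (X : world V -> Prop) (g : form V) : Prop :=
  forall w, X w -> sat w g.
Arguments BelOf {V}.

Lemma mods_BelOf (V : finType) (X : world V -> Prop) w : modsS (BelOf X) w <-> X w.
Proof.
 split.
 - intros H. apply NNPP; intro Hn.
   have Hg : BelOf X (FNeg (charf w)).
   { intros u Hu Hc. apply (proj1 (sat_char u w)) in Hc. subst u. contradiction. }
   apply (H _ Hg). apply (proj2 (sat_char w w)). reflexivity.
 - intros Hx g Hg. exact (Hg w Hx).
Qed.
Arguments mods_BelOf {V}.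

Definition Smin (V : finType) (R : world V -> world V -> Prop) w := forall w', R w w'.
Definition Mset (V : finType) (R : world V -> world V -> Prop) (a : form V) w :=
  @Smin V R w \/ is_min (fun u => sat u (FNeg a)) R w.
Definition newR (V : finType) (R : world V -> world V -> Prop) (a : form V)
  : world V -> world V -> Prop :=
  fun w1 w2 => @Mset V R a w1 \/ (~ @Mset V R a w2 /\ R w1 w2).
Arguments Smin {V}. Arguments Mset {V}. Arguments newR {V}.

Lemma newR_tp (V : finType) R a : total_preorder R -> total_preorder (@newR V R a).
Proof.
 intros [Htr Hto]. split.
 - intros x y z [Hx|[Hny Hxy]] Hyz; [left; exact Hx|]. right.
   destruct Hyz as [Hy|[Hnz Hyz]]; [contradiction|].
   split; [exact Hnz| exact (Htr _ _ _ Hxy Hyz)].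
 - intros x y. destruct (classic (Mset R a x)) as [Hx|Hx]; [left; left; exact Hx|].
   destruct (classic (Mset R a y)) as [Hy|Hy]; [right; left; exact Hy|].
   destruct (Hto x y); [left; right; auto | right; right; auto].
Qed.

Lemma Smin_newR (V : finType) R a w : Smin (@newR V R a) w <-> Mset R a w.
Proof.
 split.
 - intros H. apply NNPP; intro Hn. apply Hn. left. intro w'.
   destruct (H w') as [Hm|[_ Hr]]; [contradiction| exact Hr].
 - intros Hm w'. left; exact Hm.
Qed.

Definition TP (V : finType) := {R : world V -> world V -> Prop | total_preorder R}.
Definition contrTP (V : finType) (P : TP V) (a : form V) : TP V :=
  exist _ (newR (proj1_sig P) a) (@newR_tp V (proj1_sig P) a (proj2_sig P)).

Definition BelM (V : finType) R (a : form V) g := forall w, Mset R a w -> sat w g.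
Arguments BelM {V}.

Lemma BelC (V : finType) R (a g : form V) :
  BelOf (Smin (newR R a)) g <-> BelM R a g.
Proof.
 split; intros H w Hw.
 - apply H. apply (proj2 (Smin_newR _ _ _ _)). exact Hw.
 - apply H. apply (proj1 (Smin_newR _ _ _ _)). exact Hw.
Qed.
Arguments BelC {V}.

Lemma C2aux (V : finType) R (a : form V) s m : total_preorder R -> Smin R s -> ~ sat s a ->
  is_min (fun u => sat u (FNeg a)) R m -> Smin R m.
Proof. intros [Htr _] Hs Hsa [_ Hm] w'. exact (Htr _ _ _ (Hm s Hsa) (Hs w')). Qed.
Arguments C2aux {V R a s m}.

Lemma min_iff (T : Type) (O1 O2 : T -> Prop) R w :
  (forall u, O1 u <-> O2 u) -> is_min O1 R w -> is_min O2 R w.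
Proof.
 intros He [Hw Hm]; split; [exact (proj1 (He w) Hw)|].
 intros w' Hw'; apply Hm; exact (proj2 (He w') Hw').
Qed.

Definition w0 (V : finType) : world V := [ffun _ => false].
Definition w1 (V : finType) : world V := [ffun _ => true].

Theorem mainTheorem5 (V : finType) (hV : 1 < #|V|) :
  exists (E : Type) (Bel : E -> form V -> Prop) (contr : E -> form V -> E)
         (le : E -> world V -> world V -> Prop),
    (forall P, deductively_closed (Bel P)) /\
    AGM_contraction Bel contr /\
    faithful_assignment Bel le /\
    (forall P a w, modsS (Bel (contr P a)) w <->
                   modsS (Bel P) w \/ is_min (fun u => sat u (FNeg a)) (le P) w) /\
    CR9 contr le /\
    ~ C9' Bel contr.
Proof.
 exists (TP V), (fun P => BelOf (Smin (proj1_sig P))), (@contrTP V), (fun P => proj1_sig P).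
 split.
 { intros P b H w Hw. apply H. intros g Hg; apply Hg; exact Hw. }
 split.
 { split; [|split; [|split; [|split; [|split; [|split]]]]].
   - intros [R tp] a g H w Hw. apply H. apply (proj2 (Smin_newR _ _ _ _)). left; exact Hw.
   - intros [R tp] a Hna g Hg. apply (proj2 (BelC _ _ _)).
     intros w [Hw|Hw]; [exact (Hg w Hw)|].
     destruct (not_all_ex_not _ _ Hna) as [s Hs]. apply imply_to_and in Hs.
     destruct Hs as [Hs1 Hs2]. exact (Hg w (C2aux tp Hs1 Hs2 Hw)).
   - intros [R tp] a Hv HB. destruct (not_all_ex_not _ _ Hv) as [w Hw].
     destruct (@exists_min _ R (fun u => sat u (FNeg a)) tp (ex_intro _ w Hw)) as [m Hm].
     have HB' := proj1 (BelC _ _ _) HB. exact ((proj1 Hm) (HB' m (or_intror Hm))).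
   - intros [R tp] a g Hg w Hw.
     have Hwa : sat w a := Hw a (or_intror erefl).
     have HM : modsS (BelOf (Smin (newR R a))) w.
     { intros d Hd; apply Hw; left; exact Hd. }
     have HM1 := proj1 (mods_BelOf _ _) HM.
     destruct (proj1 (Smin_newR _ _ _ _) HM1) as [HS|[Hna _]];
       [exact (Hg w HS)| exfalso; exact (Hna Hwa)].
   - intros [R tp] a b Heq g. split; intros H;
       apply (proj2 (BelC _ _ _)); have H' := proj1 (BelC _ _ _) H;
       intros w [Hw|Hw]; apply H'.
     + left; exact Hw.
     + right. apply (@min_iff _ (fun u => sat u (FNeg b)) _ _ _); [|exact Hw].
       intros u; simpl; split; intros Hn Hs; apply Hn; apply (Heq u); exact Hs.
     + left; exact Hw.
     + right. apply (@min_iff _ (fun u => sat u (FNeg a)) _ _ _); [|exact Hw].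
       intros u; simpl; split; intros Hn Hs; apply Hn; apply (Heq u); exact Hs.
   - intros [R tp] a b g Ha Hb.
     have Ha' := proj1 (BelC _ _ _) Ha. have Hb' := proj1 (BelC _ _ _) Hb.
     apply (proj2 (BelC _ _ _)). intros w [Hw|[Hw Hm]]; [apply Ha'; left; exact Hw|].
     destruct (classic (sat w a)) as [Hwa|Hwa].
     + apply Hb'; right; split.
       * intro Hwb; apply Hw; split; assumption.
       * intros y Hy; apply Hm; intros [_ Hyb]; exact (Hy Hyb).
     + apply Ha'; right; split; [exact Hwa|].
       intros y Hy; apply Hm; intros [Hya _]; exact (Hy Hya).
   - intros [R tp] a b Hn g Hg. destruct tp as [Htr Hto] eqn:Etp.
     have Hg' := proj1 (BelC _ _ _) Hg. apply (proj2 (BelC _ _ _)).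
     destruct (not_all_ex_not _ _ Hn) as [w Hw]. apply imply_to_and in Hw.
     destruct Hw as [Hw Hwb]. have HwM := proj1 (Smin_newR _ _ _ _) Hw.
     intros m Hm; apply Hg'. destruct Hm as [Hm|Hm]; [left; exact Hm|].
     destruct HwM as [HwS|[Hwab Hwm]].
     + left. exact (C2aux (conj Htr Hto) HwS Hwb Hm).
     + right. destruct Hm as [Hmb Hmm]. split.
       * intros [_ Hb']; exact (Hmb Hb').
       * intros y Hy. exact (Htr _ _ _ (Hmm w Hwb) (Hwm y Hy)). }
 split.
 { intros [R [Htr Hto]]. simpl. split; [exact (conj Htr Hto)|]. split.
   - intros u1 u2 H1 H2.
     have H1' := proj1 (mods_BelOf _ _) H1. have H2' := proj1 (mods_BelOf _ _) H2.
     split; [exact (H1' u2)| exact (H2' u1)].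
   - intros u1 u2 H1 H2. have H1' := proj1 (mods_BelOf _ _) H1.
     split; [exact (H1' u2)|]. intros H21. apply H2. apply (proj2 (mods_BelOf _ _)).
     intros y. exact (Htr _ _ _ H21 (H1' y)). }
 split.
 { intros [R tp] a w. simpl. split.
   - intros H. have HM := proj1 (mods_BelOf _ _) H.
     destruct (proj1 (Smin_newR _ _ _ _) HM) as [HS|Hm];
       [left; apply (proj2 (mods_BelOf _ _)); exact HS | right; exact Hm].
   - intros H. apply (proj2 (mods_BelOf _ _)). apply (proj2 (Smin_newR _ _ _ _)).
     destruct H as [H|H]; [left; exact (proj1 (mods_BelOf _ _) H)| right; exact H]. }
 split.
 { intros [R [Htr Hto]] a u1 u2 H1 H2. simpl. split.
   - intros H12. destruct (classic (Mset R a u2)) as [HM|HM]; [|right; split; assumption].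
     left. destruct HM as [HS|[_ Hm]].
     + left. intro y; exact (Htr _ _ _ H12 (HS y)).
     + right. split; [exact H1| intros y Hy; exact (Htr _ _ _ H12 (Hm y Hy))].
   - intros [HM|[_ H12]]; [|exact H12].
     destruct HM as [HS|[_ Hm]]; [exact (HS u2)| exact (Hm u2 H2)]. }
 intro HC.
 have : 0 < #|V| by exact: ltnW.
 case/card_gt0P => v _.
 have Hne : w1 V <> w0 V.
 { intro E. have := f_equal (fun f : world V => f v) E. by rewrite !ffunE. }
 pose R0 := fun x y : world V => x = w0 V \/ y <> w0 V.
 have tp0 : total_preorder R0.
 { split.
   - intros x y z [Hx|Hy] Hyz; [left; exact Hx|].
     destruct Hyz as [Hy0|Hz]; [contradiction|right; exact Hz].
   - intros x y. destruct (classic (x = w0 V)); [left; left; auto|].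
     destruct (classic (y = w0 V)); [right; left; auto| left; right; auto]. }
 pose P0 : TP V := exist _ R0 tp0.
 have H1 : sat (w1 V) (FNeg (charf (w0 V))).
 { intro Hc. apply (proj1 (sat_char _ _)) in Hc. exact (Hne Hc). }
 have HC' := HC P0 (charf (w0 V)) FTop (fun _ _ => I) (w1 V) H1.
 have X : modsS (BelOf (Smin (newR (newR R0 (charf (w0 V))) FTop))) (w1 V).
 { apply (proj2 (mods_BelOf _ _)). apply (proj2 (Smin_newR _ _ _ _)). left.
   apply (proj2 (Smin_newR _ _ _ _)). right. split; [exact H1|].
   intros y Hy. right. intro Hyw. apply Hy. rewrite Hyw.
   apply (proj2 (sat_char _ _)). reflexivity. }
 have Y := proj1 HC' X.
 have Y1 := proj1 (mods_BelOf _ _) Y.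
 destruct (proj1 (Smin_newR _ _ _ _) Y1) as [HS|[Ht _]].
 - destruct (HS (w0 V)) as [E|E]; [exact (Hne E)| exact (E erefl)].
 - exact (Ht I).
Qed.
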